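(* Let $n\in\mathbb{Z}_+$, $\mathbf{a}=(a_n,\dots,a_{2n})\in\mathbb{C}^{n+1}$, $\theta\in\mathbb{C}$, $\lambda\in\mathbb{C}^*$, $\alpha\in\mathbb{C}\setminus\{0\}$, and $h=\xi t+\eta\in\mathbb{C}[t]$ with $\xi\neq0$. Then $\Omega(\lambda,\alpha,h)\otimes V_{\mathbf{a},\theta}\cong\mathrm{Ind}_{\theta,\lambda}(\mathbb{C}[t]_{\alpha,h,\mathbf{a}})$ as $\mathrm{Vir}$-modules.
   Context: $\mathrm{Vir}$ is the Lie algebra with basis $\{d_i,c\mid i\in\mathbb{Z}\}$ and brackets $[d_i,d_j]=(j-i)d_{i+j}+\delta_{i,-j}\frac{i^3-i}{12}c$, $[c,d_i]=0$. Operators on $\mathbb{C}[t]$: $F(f)=\frac{h(t)-h(\alpha)}{t-\alpha}f(t)-f'(t)$, $G(f)=h(\alpha)f+tF(f)$. $\Omega(\lambda,\alpha,h)$ is $\mathbb{C}[t,s]$ with $c$ acting as $0$ and $d_m(f(t)s^i)=\lambda^m(s-m)^i\big(sf+mG(f)-m^2\alpha F(f)\big)$ for $m\in\mathbb{Z}$, $i\in\mathbb{Z}_+$, $f\in\mathbb{C}[t]$; tensor products carry $x(a\otimes v)=xa\otimes v+a\otimes xv$. Let $\mathrm{Vir}_+^{(n-1)}$ be the subalgebra spanned by $\{d_i\mid i\ge n\}$; make $\mathbb{C}$ a $\mathrm{Vir}_+^{(n-1)}$-module by $d_i\cdot1=a_i$ for $n\le i\le 2n$ and $d_i\cdot1=0$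 for $i>2n$, and set $V_{\mathbf{a},\theta}=U(\mathrm{Vir})\otimes_{U(\mathrm{Vir}_+^{(n-1)})}\mathbb{C}\,/\,(c-\theta)U(\mathrm{Vir})\otimes_{U(\mathrm{Vir}_+^{(n-1)})}\mathbb{C}$. Let $\mathfrak{b}_{\lambda,n+1}=\mathrm{span}\{d_k-\lambda^{k-n}d_n\mid k\ge n+1\}$ and let $\mathbb{C}[t]_{\alpha,h,\mathbf{a}}$ be $\mathbb{C}[t]$ with $\mathfrak{b}_{\lambda,n+1}$-action $(d_k-\lambda^{k-n}d_n)\circ f=(k-n)\lambda^k\big(G(f)-(k+n)\alpha F(f)\big)+(a_k-\lambda^{k-n}a_n)f$ ($a_k:=0$ for $k>2n$). Then $\mathrm{Ind}_{\theta,\lambda}(\mathbb{C}[t]_{\alpha,h,\mathbf{a}})=U(\mathrm{Vir})\otimes_{U(\mathfrak{b}_{\lambda,n+1})}\mathbb{C}[t]_{\alpha,h,\mathbf{a}}\,/\,(c-\theta)U(\mathrm{Vir})\otimes_{U(\mathfrak{b}_{\lambda,n+1})}\mathbb{C}[t]_{\alpha,h,\mathbf{a}}$. *)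

(* Defs.v *)
From mathcomp Require Import all_boot all_algebra.
From mathcomp Require Import complex Rstruct.
Set Implicit Arguments. Unset Strict Implicit. Unset Printing Implicit Defensive.
Import GRing.Theory Num.Theory.
Local Open Scope ring_scope.

Definition C : fieldType := (Rdefinitions.R)[i].

Definition islin (U W : lmodType C) (f : U -> W) : Prop :=
  forall (a : C) (x y : U), f (a *: x + y) = a *: f x + f y.

(* ---------- Vir-modules ----------
   d i is the action of d_i (i : int), c the action of the central element;
   [x,y] acts as xy - yx. *)
Definition vir_module (V : lmodType C) (d : int -> V -> V) (c : V -> V) : Prop :=
  [/\ forall i, islin (d i), islin c,
      forall (i j : int) (v : V),
        d i (d j v) - d j (d i v) =
          ((j - i)%:~R : C) *: d (i + j) v
          + (if i == - j then ((i ^+ 3 - i)%:~R / 12%:R : C) *: c v else 0)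
    & forall (i : int) (v : V), c (d i v) = d i (c v)].

Definition vir_hom (V : lmodType C) (dV : int -> V -> V) (cV : V -> V)
    (W : lmodType C) (dW : int -> W -> W) (cW : W -> W) (f : V -> W) : Prop :=
  [/\ islin f, forall i v, f (dV i v) = dW i (f v) & forall v, f (cV v) = cW (f v)].

Definition hquot (al : C) (h : {poly C}) : {poly C} :=
  (h - (h.[al])%:P) %/ ('X - al%:P).

Definition Fop (al : C) (h : {poly C}) (f : {poly C}) : {poly C} :=
  hquot al h * f - f^`().

Definition Gop (al : C) (h : {poly C}) (f : {poly C}) : {poly C} :=
  h.[al] *: f + 'X * Fop al h f.

(* ---------- the module Omega(lambda, alpha, h) = C[t,s] ----------
   An element is a polynomial in s with coefficients in C[t]:
   P = \sum_i P_i(t) s^i, with P : {poly {poly C}} (outer variable = s). *)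
Definition Omega := {poly {poly C}}.
Definition cst (a : C) : Omega := (a%:P)%:P.

(* d_m (f(t) s^i) = lambda^m (s-m)^i (s f + m G(f) - m^2 alpha F(f)),
   extended linearly. *)
Definition omega_d (lam al : C) (h : {poly C}) (m : int) (P : Omega) : Omega :=
  cst (lam ^ m) *
  \sum_(i < size P)
     ('X - cst (m%:~R)) ^+ i *
     ('X * (P`_i)%:P
      + ((m%:~R : C) *: Gop al h P`_i
         - ((m ^+ 2)%:~R * al : C) *: Fop al h P`_i)%:P).

Definition omega_c (P : Omega) : Omega := 0.

Definition om_bilin (V Y : lmodType C) (b : Omega -> V -> Y) : Prop :=
  [/\ forall P Q v, b (P + Q) v = b P v + b Q v,
      forall a P v, b (cst a * P) v = a *: b P v,
      forall P u w, b P (u + w) = b P u + b P w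
    & forall a P v, b P (a *: v) = a *: b P v].

Definition is_tensor (V T : lmodType C) (beta : Omega -> V -> T) : Prop :=
  om_bilin beta /\
  forall (Y : lmodType C) (g : Omega -> V -> Y), om_bilin g ->
    (exists g' : T -> Y, islin g' /\ forall P v, g' (beta P v) = g P v) /\
    (forall g1 g2 : T -> Y, islin g1 -> islin g2 ->
       (forall P v, g1 (beta P v) = g P v) ->
       (forall P v, g2 (beta P v) = g P v) -> forall x, g1 x = g2 x).

(* ---------- V_{a,theta}, via its universal property ----------
   The generating vector w of U(Vir) (x)_{U(Vir_+^{(n-1)})} C / (c - theta):
   d_i w = a_i w (n <= i <= 2n), d_i w = 0 (i > 2n), c w = theta w. *)
Definition Va_gen (n : nat) (a : nat -> C) (th : C)
    (X : lmodType C) (dX : int -> X -> X) (cX : X -> X) (x : X) : Prop :=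
  [/\ forall i : nat, (n <= i <= 2 * n)%N -> dX (Posz i) x = a i *: x,
      forall i : nat, (2 * n < i)%N -> dX (Posz i) x = 0
    & cX x = th *: x].

Definition is_Va (n : nat) (a : nat -> C) (th : C)
    (V : lmodType C) (d : int -> V -> V) (c : V -> V) (w : V) : Prop :=
  [/\ vir_module d c, Va_gen n a th d c w &
      forall (X : lmodType C) (dX : int -> X -> X) (cX : X -> X) (x : X),
        vir_module dX cX -> Va_gen n a th dX cX x ->
        (exists f : V -> X, vir_hom d c dX cX f /\ f w = x) /\
        (forall f1 f2 : V -> X, vir_hom d c dX cX f1 -> vir_hom d c dX cX f2 ->
           f1 w = x -> f2 w = x -> forall v, f1 v = f2 v)].

Definition aext (n : nat) (a : nat -> C) (k : nat) : C :=
  if (k <= 2 * n)%N then a k else 0.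

(* the action of d_k - lambda^(k-n) d_n (k >= n+1) on C[t]_{alpha,h,a} *)
Definition bmod_act (n : nat) (a : nat -> C) (lam al : C) (h : {poly C})
    (k : nat) (f : {poly C}) : {poly C} :=
  ((k - n)%:R * lam ^+ k : C) *: (Gop al h f - ((k + n)%:R * al : C) *: Fop al h f)
  + (aext n a k - lam ^+ (k - n) * aext n a n) *: f.

(* j : C[t] -> X is a b_{lambda,n+1}-module map on which c acts as theta *)
Definition Ind_gen (n : nat) (a : nat -> C) (th lam al : C) (h : {poly C})
    (X : lmodType C) (dX : int -> X -> X) (cX : X -> X) (j : {poly C} -> X) : Prop :=
  [/\ islin j,
      forall (k : nat) (f : {poly C}), (n < k)%N ->
        j (bmod_act n a lam al h k f) = dX (Posz k) (j f) - lam ^+ (k - n) *: dX (Posz n) (j f)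
    & forall f, cX (j f) = th *: j f].

Definition is_Ind (n : nat) (a : nat -> C) (th lam al : C) (h : {poly C})
    (M : lmodType C) (d : int -> M -> M) (c : M -> M) (iota : {poly C} -> M) : Prop :=
  [/\ vir_module d c, Ind_gen n a th lam al h d c iota &
      forall (X : lmodType C) (dX : int -> X -> X) (cX : X -> X) (j : {poly C} -> X),
        vir_module dX cX -> Ind_gen n a th lam al h dX cX j ->
        (exists g : M -> X, vir_hom d c dX cX g /\ forall f, g (iota f) = j f) /\
        (forall g1 g2 : M -> X, vir_hom d c dX cX g1 -> vir_hom d c dX cX g2 ->
           (forall f, g1 (iota f) = j f) -> (forall f, g2 (iota f) = j f) ->
           forall x, g1 x = g2 x)].

(* Main.v *)
From HB Require Import structures.
Require Import Defs.
From mathcomp Require Import all_boot all_algebra.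
From mathcomp Require Import complex Rstruct.
From mathcomp Require Import boolp ring zify.
From Stdlib Require Import ProofIrrelevance FunctionalExtensionality.
Set Implicit Arguments. Unset Strict Implicit. Unset Printing Implicit Defensive.
Import GRing.Theory Num.Theory.
Local Open Scope ring_scope.

Record sfun (A : Type) (Y : lmodType C) (Pr : (A -> Y) -> Prop)
  (Pr0 : Pr (fun _ => 0))
  (PrL : forall (a : C) f g, Pr f -> Pr g -> Pr (fun x => a *: f x + g x)) :=
  SF { fval : A -> Y ; fprop : Pr fval }.
Arguments SF {A Y Pr Pr0 PrL fval}.
Arguments fval {A Y Pr Pr0 PrL}.

Section SubFun.
Variables (A : Type) (Y : lmodType C) (Pr : (A -> Y) -> Prop).
Hypothesis Pr0 : Pr (fun _ => 0).
Hypothesis PrL : forall (a : C) f g, Pr f -> Pr g -> Pr (fun x => a *: f x + g x).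
Local Notation sfun := (@sfun A Y Pr Pr0 PrL).
Local Notation SF := (@SF A Y Pr Pr0 PrL _).

Lemma sfunP (u v : sfun) : fval u = fval v -> u = v.
Proof.
case: u => f pf; case: v => g pg /= e; subst g; by rewrite (proof_irrelevance _ pf pg).
Qed.

Lemma sfunE (u v : sfun) : (forall x, fval u x = fval v x) -> u = v.
Proof. by move=> e; apply: sfunP; apply: functional_extensionality. Qed.

HB.instance Definition _ := gen_eqMixin sfun.
HB.instance Definition _ := gen_choiceMixin sfun.

Lemma PrS a f : Pr f -> Pr (fun x => a *: f x).
Proof.
move=> pf; have -> : (fun x => a *: f x) = (fun x => a *: f x + (fun _ => 0) x).
  by apply: functional_extensionality=> x; rewrite addr0.
exact: PrL.
Qed.
Lemma PrD f g : Pr f -> Pr g -> Pr (fun x => f x + g x).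
Proof.
move=> pf pg; have -> : (fun x => f x + g x) = (fun x => 1 *: f x + g x).
  by apply: functional_extensionality=> x; rewrite scale1r.
exact: PrL.
Qed.

Definition s0 : sfun := SF Pr0.
Definition sadd (u v : sfun) : sfun := SF (PrD (fprop u) (fprop v)).
Definition sopp (u : sfun) : sfun := SF (PrS (-1) (fprop u)).
Definition sscale (a : C) (u : sfun) : sfun := SF (PrS a (fprop u)).

Lemma saddA : associative sadd. Proof. by move=> u v w; apply: sfunE=> x /=; rewrite addrA. Qed.
Lemma saddC : commutative sadd. Proof. by move=> u v; apply: sfunE=> x /=; rewrite addrC. Qed.
Lemma sadd0 : left_id s0 sadd. Proof. by move=> u; apply: sfunE=> x /=; rewrite add0r. Qed.
Lemma saddN : left_inverse s0 sopp sadd.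
Proof. by move=> u; apply: sfunE=> x /=; rewrite scaleN1r addNr. Qed.

HB.instance Definition _ := GRing.isZmodule.Build sfun saddA saddC sadd0 saddN.

Lemma sscaleA a b v : sscale a (sscale b v) = sscale (a * b) v.
Proof. by apply: sfunE=> x /=; rewrite scalerA. Qed.
Lemma sscale1 : left_id 1 sscale. Proof. by move=> u; apply: sfunE=> x /=; rewrite scale1r. Qed.
Lemma sscaleDr : right_distributive sscale +%R.
Proof. by move=> a u v; apply: sfunE=> x /=; rewrite scalerDr. Qed.
Lemma sscaleDl v : {morph sscale^~ v: a b / a + b}.
Proof. by move=> a b; apply: sfunE=> x /=; rewrite scalerDl. Qed.

HB.instance Definition _ := GRing.Zmodule_isLmodule.Build C sfun sscaleA sscale1 sscaleDr sscaleDl.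

Lemma svalD (u v : sfun) x : fval (u + v) x = fval u x + fval v x. Proof. by []. Qed.
Lemma svalZ a (u : sfun) x : fval (a *: u) x = a *: fval u x. Proof. by []. Qed.
Lemma svalL a (u v : sfun) x : fval (a *: u + v) x = a *: fval u x + fval v x. Proof. by []. Qed.
Lemma sval0 x : fval (0 : sfun) x = 0. Proof. by []. Qed.
End SubFun.

Section TE.
Variables (R : comNzRingType) (Z : lmodType R).
Definition TE := (R * Z)%type.
HB.instance Definition _ := GRing.Zmodule.on TE.
Definition te1 : TE := (1, 0).
Definition temul (u v : TE) : TE := (u.1 * v.1, u.1 *: v.2 + v.1 *: u.2).
Lemma temulA : associative temul.
Proof. move=> [a x] [b y] [c z]; rewrite /temul /=; congr (_, _); first by rewrite mulrA.
by rewrite !scalerDr !scalerA [c * a]mulrC [c * b]mulrC addrA.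
Qed.
Lemma temulC : commutative temul.
Proof. by move=> [a x] [b y]; rewrite /temul /= mulrC addrC. Qed.
Lemma temul1 : left_id te1 temul.
Proof. by move=> [a x]; rewrite /temul /= mul1r scale1r scaler0 addr0. Qed.
Lemma temulDl : left_distributive temul +%R.
Proof. move=> [a x] [b y] [c z]; rewrite /temul /=; congr (_, _); first by rewrite mulrDl.
by rewrite scalerDl scalerDr addrACA. Qed.
Lemma te1_neq0 : te1 != 0.
Proof. by apply/negP => /eqP [] /eqP; rewrite oner_eq0. Qed.
HB.instance Definition _ := GRing.Zmodule_isComNzRing.Build TE temulA temulC temul1 temulDl te1_neq0.
Definition inj (x : Z) : TE := (0, x).
Lemma inj_inj : injective inj. Proof. by move=> x y []. Qed.
Lemma injD x y : inj (x + y) = inj x + inj y. Proof. by rewrite /inj; congr (_,_); rewrite addr0. Qed.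
Lemma injN x : inj (- x) = - inj x. Proof. by rewrite /inj; congr (_,_); rewrite oppr0. Qed.
Lemma injB x y : inj (x - y) = inj x - inj y. Proof. by rewrite injD injN. Qed.
Lemma inj0 : inj 0 = 0. Proof. by []. Qed.
Definition sc (a : R) : TE := (a, 0).
Lemma sc0 : sc 0 = 0. Proof. by []. Qed.
Lemma scD a b : sc (a + b) = sc a + sc b. Proof. by rewrite /sc; congr (_,_); rewrite addr0. Qed.
HB.instance Definition _ := GRing.isNmodMorphism.Build R TE sc (sc0, scD).
Lemma sc_mon : monoid_morphism sc.
Proof. split => // a b; rewrite /sc /GRing.mul /= /temul /=; congr (_,_); by rewrite !scaler0 addr0. Qed.
HB.instance Definition _ := GRing.isMonoidMorphism.Build R TE sc sc_mon.
Lemma injZ a x : inj (a *: x) = sc a * inj x.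
Proof. rewrite /inj; congr (_,_) => /=; first by rewrite mulr0. by rewrite scaler0 addr0. Qed.

End TE.
Ltac zmr := apply: inj_inj; rewrite ?(injD, injB, injN, injZ, inj0); ring.

Section Om.
Variables (lam al : C) (h : {poly C}).
Local Notation F := (Fop al h).
Local Notation G := (Gop al h).
Local Notation dl := (omega_d lam al h).
Implicit Types (P Q : Omega) (f g : {poly C}).

Lemma FL (a : C) f g : F (a *: f + g) = a *: F f + F g.
Proof. rewrite /Fop derivD derivZ -!mul_polyC; ring. Qed.
Lemma GL (a : C) f g : G (a *: f + g) = a *: G f + G g.
Proof. rewrite /Gop FL -!mul_polyC; ring. Qed.
Lemma F0 : F 0 = 0. Proof. by rewrite /Fop mulr0 deriv0 subrr. Qed.
Lemma G0 : G 0 = 0. Proof. by rewrite /Gop F0 scaler0 mulr0 addr0. Qed.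
Lemma FD f g : F (f + g) = F f + F g. Proof. by have := FL 1 f g; rewrite !scale1r. Qed.
Lemma GD f g : G (f + g) = G f + G g. Proof. by have := GL 1 f g; rewrite !scale1r. Qed.
Lemma FZ (a : C) f : F (a *: f) = a *: F f. Proof. by have := FL a f 0; rewrite F0 !addr0. Qed.
Lemma GZ (a : C) f : G (a *: f) = a *: G f. Proof. by have := GL a f 0; rewrite G0 !addr0. Qed.
Lemma FXM f : F ('X * f) = 'X * F f - f.
Proof. rewrite /Fop derivM derivX mul1r; ring. Qed.
Lemma GF f : G (F f) - F (G f) = F f.
Proof. rewrite /Gop (FD (_ *: f)) FZ FXM; ring. Qed.

Definition term (m : int) (i : nat) (f : {poly C}) : Omega :=
  ('X - cst (m%:~R)) ^+ i *
     ('X * f%:P + ((m%:~R : C) *: G f - ((m ^+ 2)%:~R * al : C) *: F f)%:P).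

Lemma term0 m i : term m i 0 = 0.
Proof. by rewrite /term F0 G0 !scaler0 subr0 !rmorph0 mulr0 addr0 mulr0. Qed.
Lemma termD m i f g : term m i (f + g) = term m i f + term m i g.
Proof. rewrite /term FD GD !scalerDr !rmorphD /=; ring. Qed.
Lemma termC m i a f : term m i (a%:P * f) = cst a * term m i f.
Proof. rewrite /term !mul_polyC FZ GZ !scalerA ![_ * a]mulrC -!scalerA -!scalerBr.
rewrite -!mul_polyC /cst !rmorphM /=; ring. Qed.

Lemma od_sum m P N : (size P <= N)%N ->
  dl m P = cst (lam ^ m) * \sum_(i < N) term m i P`_i.
Proof.
move=> le; rewrite /omega_d; congr (_ * _).
transitivity (\sum_(i < size P) term m i P`_i); first by [].
rewrite (big_ord_widen _ (fun i => term m i P`_i) le) big_mkcond /=.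
apply: eq_bigr => i _; case: ifP => // /negbT; rewrite -leqNgt => le2.
by rewrite nth_default // term0.
Qed.

Lemma odD m P Q : dl m (P + Q) = dl m P + dl m Q.
Proof.
pose N := maxn (size P) (size Q).
rewrite (@od_sum m (P + Q) N) ?(leq_trans (size_polyD _ _)) //.
rewrite (@od_sum m P N) ?leq_maxl // (@od_sum m Q N) ?leq_maxr //.
rewrite -mulrDr -big_split /=; congr (_ * _); apply: eq_bigr => i _.
by rewrite coefD termD.
Qed.

Lemma odC m a P : dl m (cst a * P) = cst a * dl m P.
Proof.
rewrite (@od_sum m (cst a * P) (size P)); last first.
  by rewrite /cst mul_polyC size_scale_leq.
rewrite (@od_sum m P (size P)) // mulrCA; congr (_ * _).
rewrite mulr_sumr; apply: eq_bigr => i _.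
by rewrite /cst coefCM termC.
Qed.

Lemma od0 m : dl m 0 = 0.
Proof. by have := odC m 0 0; rewrite /cst !rmorph0 !mul0r. Qed.
Lemma odN m P : dl m (- P) = - dl m P.
Proof. by apply/eqP; rewrite -subr_eq0 opprK -odD addNr od0. Qed.
Lemma odB m P Q : dl m (P - Q) = dl m P - dl m Q.
Proof. by rewrite odD odN. Qed.

Lemma odX m P : dl m ('X * P) = ('X - cst (m%:~R)) * dl m P.
Proof.
rewrite (@od_sum m ('X * P) (size P).+1); last first.
  have [->|nz] := eqVneq P 0; first by rewrite mulr0 size_poly0.
  by rewrite mulrC size_mulX.
rewrite (@od_sum m P (size P)) // big_ord_recl /= coefXM eqxx term0 add0r.
rewrite mulrCA; congr (_ * _); rewrite mulr_sumr; apply: eq_bigr => i _.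
by rewrite coefXM /= /term /bump leq0n add0n add1n exprS mulrA.
Qed.

Lemma odK m f : dl m (f%:P) =
  cst (lam ^ m) * ('X * f%:P + ((m%:~R : C) *: G f - ((m ^+ 2)%:~R * al : C) *: F f)%:P).
Proof.
rewrite (@od_sum m (f%:P) 1) ?size_polyC ?leq_b1 // big_ord1 /term expr0 mul1r.
by rewrite coefC eqxx.
Qed.

End Om.

Section Om2.
Variables (lam al : C) (h : {poly C}).
Hypothesis lam0 : lam != 0.
Local Notation F := (Fop al h).
Local Notation G := (Gop al h).
Local Notation dl := (omega_d lam al h).
Implicit Types (P Q : Omega) (f g : {poly C}).

Lemma FN f : F (- f) = - F f. Proof. by rewrite -scaleN1r FZ scaleN1r. Qed.
Lemma GN f : G (- f) = - G f. Proof. by rewrite -scaleN1r GZ scaleN1r. Qed.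
Lemma FB f g : F (f - g) = F f - F g. Proof. by rewrite FD FN. Qed.
Lemma GB f g : G (f - g) = G f - G g. Proof. by rewrite GD GN. Qed.

Lemma cstD a b : cst (a + b) = cst a + cst b. Proof. by rewrite /cst !rmorphD. Qed.
Lemma cstM a b : cst (a * b) = cst a * cst b. Proof. by rewrite /cst !rmorphM. Qed.
Lemma cstB a b : cst (a - b) = cst a - cst b. Proof. by rewrite /cst !rmorphB. Qed.

Lemma odXm m a Q : dl m (('X - cst a) * Q) = ('X - cst m%:~R) * dl m Q - cst a * dl m Q.
Proof. by rewrite mulrBl odB odX odC. Qed.

Lemma comm_const (i j : int) f :
  dl i (dl j f%:P) - dl j (dl i f%:P) = cst ((j - i)%:~R) * dl (i + j) f%:P.
Proof.
rewrite !odK !odC !odD !odX !odK !GB !FB !GZ !FZ.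
have e := GF al h f.
have -> : G (F f) = F (G f) + F f by apply/eqP; rewrite addrC -subr_eq e.
rewrite expfzDr // /cst -!mul_polyC.
ring.
Qed.


Lemma odComm (i j : int) P :
  dl i (dl j P) - dl j (dl i P) = cst ((j - i)%:~R) * dl (i + j) P.
Proof.
elim/poly_ind: P => [|p c IH]; first by rewrite !od0 subrr mulr0.
rewrite [p * 'X]mulrC !odD !odX !odXm.
have Kc := comm_const i j c.
have eA : dl i (dl j p) = dl j (dl i p) + cst ((j - i)%:~R) * dl (i + j) p.
  by rewrite -IH addrCA subrr addr0.
have eK : dl i (dl j c%:P) = dl j (dl i c%:P) + cst ((j - i)%:~R) * dl (i + j) c%:P.
  by rewrite -Kc addrCA subrr addr0.
rewrite eA eK /cst; ring.
Qed.

End Om2.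

Section Om3.
Variables (lam al : C) (h : {poly C}).
Local Notation F := (Fop al h).
Local Notation G := (Gop al h).
Local Notation dl := (omega_d lam al h).
Implicit Types (P Q : Omega) (f g : {poly C}).

Lemma bmodE n a k f : (n < k)%N ->
  (bmod_act n a lam al h k f)%:P =
  dl k f%:P - cst (lam ^+ (k - n)) * dl n f%:P
  + cst (aext n a k - lam ^+ (k - n) * aext n a n) * f%:P.
Proof.
move=> lt; rewrite !odK -!exprnP /bmod_act.
have ek : lam ^+ k = lam ^+ (k - n) * lam ^+ n by rewrite -exprD subnK // ltnW.
rewrite ek natrB ?(ltnW lt) // /cst -!mul_polyC.
ring.
Qed.

Lemma size_cstK a f : (size (cst a * f%:P)%R <= 1)%N.
Proof. by rewrite /cst -polyCM size_polyC leq_b1. Qed.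

Lemma size_odK m f : (size (dl m f%:P) <= 2)%N.
Proof.
rewrite odK /cst mul_polyC (leq_trans (size_scale_leq _ _)) //.
rewrite (leq_trans (size_polyD _ _)) // geq_max size_polyC; apply/andP; split; last by case: (_ != _).
rewrite (leq_trans (size_mul_leq _ _)) // size_polyX size_polyC; by case: (_ != _).
Qed.

Lemma size_od m P : (size (dl m P) <= (size P).+1)%N.
Proof.
elim/poly_ind: P => [|p c IH]; first by rewrite od0 size_poly0.
have [->|nzp] := eqVneq p 0.
  rewrite mul0r add0r; have [->|nzc] := eqVneq c 0; first by rewrite od0 size_poly0.
  by rewrite size_polyC nzc size_odK.
rewrite size_MXaddC (negbTE nzp) /= [p * 'X]mulrC odD odX.
have sp : (0 < size p)%N by rewrite size_poly_gt0.
rewrite (leq_trans (size_polyD _ _)) // geq_max; apply/andP; split.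
  rewrite (leq_trans (size_mul_leq _ _)) // size_XsubC; change (2%R : nat) with 2%N; rewrite add2n /= ltnS; exact: IH.
exact: leq_trans (size_odK m c) _.
Qed.

Definition Eop (n : nat) P := dl n P - cst (lam ^+ n) * ('X * P).

Lemma EopD n P Q : Eop n (P + Q) = Eop n P + Eop n Q.
Proof. rewrite /Eop odD; ring. Qed.
Lemma EopC n a P : Eop n (cst a * P) = cst a * Eop n P.
Proof. rewrite /Eop odC; ring. Qed.
Lemma Eop0 n : Eop n 0 = 0.
Proof. by rewrite /Eop od0 !mulr0 subr0. Qed.

Lemma EopX n p : Eop n ('X * p) = 'X * Eop n p - cst (n%:R) * dl n p.
Proof. rewrite /Eop odX /cst; ring. Qed.

Lemma EopK n c : (size (Eop n c%:P) <= 1)%N.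
Proof.
rewrite /Eop odK -exprnP; set K := (_ - _)%:P.
have -> : cst (lam ^+ n) * ('X * c%:P + K) - cst (lam ^+ n) * ('X * c%:P) = cst (lam ^+ n) * K by ring.
exact: size_cstK.
Qed.

Lemma size_Eop n P : (size (Eop n P) <= size P)%N.
Proof.
elim/poly_ind: P => [|p c IH]; first by rewrite Eop0 size_poly0.
have [->|nzp] := eqVneq p 0.
  rewrite mul0r add0r; have [->|nzc] := eqVneq c 0; first by rewrite Eop0 size_poly0.
  by rewrite size_polyC nzc EopK.
rewrite size_MXaddC (negbTE nzp) /= [p * 'X]mulrC EopD EopX.
have sp : (0 < size p)%N by rewrite size_poly_gt0.
rewrite (leq_trans (size_polyD _ _)) // geq_max; apply/andP; split; last by apply: leq_trans (EopK n c) _.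
rewrite (leq_trans (size_polyD _ _)) // geq_max size_opp; apply/andP; split.
  rewrite (leq_trans (size_mul_leq _ _)) // size_polyX; change (2%R : nat) with 2%N.
  by rewrite add2n /= ltnS.
by rewrite /cst mul_polyC (leq_trans (size_scale_leq _ _)) // size_od.
Qed.

End Om3.

Section Lin.
Variables (U W : lmodType C) (f : U -> W).
Hypothesis fl : islin f.
Lemma lin0 : f 0 = 0.
Proof.
have e := fl 1 0 0; rewrite !scale1r !addr0 in e.
by apply: (addrI (f 0)); rewrite addr0 -e.
Qed.
Lemma linD x y : f (x + y) = f x + f y.
Proof. by have := fl 1 x y; rewrite !scale1r. Qed.
Lemma linZ a x : f (a *: x) = a *: f x.
Proof. by have := fl a x 0; rewrite !addr0 lin0 addr0. Qed.
Lemma linN x : f (- x) = - f x.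
Proof. by rewrite -scaleN1r linZ scaleN1r. Qed.
Lemma linB x y : f (x - y) = f x - f y.
Proof. by rewrite linD linN. Qed.
End Lin.

Lemma islin_comp (U W Z : lmodType C) (f : U -> W) (g : W -> Z) :
  islin f -> islin g -> islin (fun x => g (f x)).
Proof. by move=> fl gl a x y; rewrite fl gl. Qed.

Lemma vir_hom_comp (U W Z : lmodType C) dU cU dW cW dZ cZ (f : U -> W) (g : W -> Z) :
  vir_hom dU cU dW cW f -> vir_hom dW cW dZ cZ g -> vir_hom dU cU dZ cZ (fun x => g (f x)).
Proof.
case=> fl fd fc [gl gd gc]; split; first exact: islin_comp.
  by move=> i v; rewrite fd gd.
by move=> v; rewrite fc gc.
Qed.

Lemma Va_gen_hom n a th (U W : lmodType C) dU cU dW cW (f : U -> W) x :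
  vir_hom dU cU dW cW f -> Va_gen n a th dU cU x -> Va_gen n a th dW cW (f x).
Proof.
case=> fl fd fc [h1 h2 h3]; split.
- by move=> i hi; rewrite -fd h1 // linZ.
- by move=> i hi; rewrite -fd h2 // lin0.
- by rewrite -fc h3 linZ.
Qed.

Lemma Ind_gen_hom n a th lam al h (U W : lmodType C) dU cU dW cW (f : U -> W) j :
  vir_hom dU cU dW cW f -> Ind_gen n a th lam al h dU cU j ->
  Ind_gen n a th lam al h dW cW (fun p => f (j p)).
Proof.
case=> fl fd fc [h1 h2 h3]; split.
- exact: islin_comp.
- by move=> k p hk; rewrite h2 // linB // linZ // !fd.
- by move=> p; rewrite -fc h3 linZ.
Qed.

Definition kap (i : int) : C := ((i ^+ 3 - i)%:~R / 12%:R : C).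

Section HomMod.
Variables (lam al : C) (h : {poly C}).
Hypothesis lam0 : lam != 0.
Local Notation dl := (omega_d lam al h).
Variables (Z : lmodType C) (dZ : int -> Z -> Z) (cZ : Z -> Z).
Hypothesis vZ : vir_module dZ cZ.

Definition omlin (phi : Omega -> Z) : Prop :=
  (forall P Q, phi (P + Q) = phi P + phi Q) /\ (forall a P, phi (cst a * P) = a *: phi P).

Lemma omlin0 : omlin (fun _ => 0).
Proof. by split=> *; rewrite ?addr0 ?scaler0. Qed.
Lemma omlinL a f g : omlin f -> omlin g -> omlin (fun x => a *: f x + g x).
Proof.
case=> f1 f2 [g1 g2]; split=> *; rewrite ?f1 ?g1 ?f2 ?g2.
  by rewrite scalerDr addrACA.
by rewrite scalerDr !scalerA mulrC.
Qed.

Definition HM := @sfun Omega Z omlin omlin0 omlinL.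

Lemma omlin_act m (phi : HM) : omlin (fun P => dZ m (fval phi P) - fval phi (dl m P)).
Proof.
case: vZ => dlin _ _ _; case: (fprop phi) => p1 p2; split.
  move=> P Q; rewrite p1 odD p1 linD //; by rewrite opprD addrACA.
move=> a P; rewrite p2 odC p2 linZ // scalerBr //.
Qed.

Lemma omlin_c (phi : HM) : omlin (fun P => cZ (fval phi P)).
Proof.
case: vZ => _ clin _ _; case: (fprop phi) => p1 p2; split.
  by move=> P Q; rewrite p1 linD.
by move=> a P; rewrite p2 linZ.
Qed.

Definition hmd (m : int) (phi : HM) : HM := SF (omlin_act m phi).
Definition hmc (phi : HM) : HM := SF (omlin_c phi).

Lemma omlinB (phi : HM) P Q : fval phi (P - Q) = fval phi P - fval phi Q.
Proof.
case: (fprop phi) => p1 p2.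
have eN : fval phi (- Q) = - fval phi Q.
  by rewrite -mulN1r (_ : -1 = cst (-1)) ?p2 ?scaleN1r // /cst !rmorphN !rmorph1.
by rewrite p1 eN.
Qed.

Lemma HM_vir : vir_module hmd hmc.
Proof.
case: vZ => dlin clin comm ccomm; split.
- move=> m a phi psi; apply: sfunE => P /=.
  rewrite dlin; zmr.
- move=> a phi psi; apply: sfunE => P /=; by rewrite clin.
- move=> i j phi; apply: sfunE => P /=.
  have cm := comm i j (fval phi P).
  have eO : dl i (dl j P) = dl j (dl i P) + cst ((j - i)%:~R) * dl (i + j) P.
    by rewrite -(@odComm lam al h lam0 i j P); ring.
  have e2 : fval phi (dl i (dl j P)) =
            fval phi (dl j (dl i P)) + (j - i)%:~R *: fval phi (dl (i + j) P).
    by rewrite eO; case: (fprop phi) => -> ->.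
  rewrite !(linB (dlin _)) e2.
  have eA : dZ i (dZ j (fval phi P)) = dZ j (dZ i (fval phi P)) +
     ((j - i)%:~R *: dZ (i + j) (fval phi P) +
    (if i == - j then ((i ^+ 3 - i)%:~R / 12) *: cZ (fval phi P) else 0)).
    by rewrite -cm; zmr.
  rewrite eA; case: (i == - j); rewrite ?svalD ?svalZ ?sval0 /=; zmr.
- by move=> i phi; apply: sfunE => P /=; rewrite (linB clin) ccomm.
Qed.
End HomMod.

Definition word := seq (option int).

Lemma subr_eqE (Z : zmodType) (x y z : Z) : x - y = z -> x = z + y.
Proof. by move/eqP; rewrite subr_eq => /eqP. Qed.

Section CoI.
Variable (Y : lmodType C).

Definition Rel (psi : word -> Y) : Prop := forall u,
  (forall i j w, psi (u ++ Some j :: Some i :: w) - psi (u ++ Some i :: Some j :: w) =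
     (j - i)%:~R *: psi (u ++ Some (i + j) :: w) +
     (if i == - j then ((i ^+ 3 - i)%:~R / 12%:R : C) *: psi (u ++ None :: w) else 0))
  /\ (forall i w, psi (u ++ Some i :: None :: w) = psi (u ++ None :: Some i :: w)).

Lemma Rel0 : Rel (fun _ => 0).
Proof.
move=> u; split=> // i j w; rewrite subrr scaler0 add0r.
by case: (_ == _); rewrite ?scaler0.
Qed.

Lemma RelL a f g : Rel f -> Rel g -> Rel (fun x => a *: f x + g x).
Proof.
move=> Rf Rg u; have [f1 f2] := Rf u; have [g1 g2] := Rg u; split.
  move=> i j w; rewrite (subr_eqE (f1 i j w)) (subr_eqE (g1 i j w)).
  by case: ifP => _; zmr.
by move=> i w; rewrite f2 g2.
Qed.

Definition CoI := @sfun word Y Rel Rel0 RelL.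

Lemma Rel_cons (psi : CoI) o : Rel (fun w => fval psi (o :: w)).
Proof. by move=> u; exact: (fprop psi (o :: u)). Qed.

Definition cod (i : int) (psi : CoI) : CoI := SF (Rel_cons psi (Some i)).
Definition coc (psi : CoI) : CoI := SF (Rel_cons psi None).

Lemma CoI_vir : vir_module cod coc.
Proof.
split.
- by move=> m a phi psi; apply: sfunE => w.
- by move=> a phi psi; apply: sfunE => w.
- move=> i j psi; apply: sfunE => w /=.
  have [p1 _] := fprop psi [::]; have := p1 i j w => /= e.
  rewrite (subr_eqE e); case: ifP => _ /=; zmr.
- move=> i psi; apply: sfunE => w /=.
  have [_ p2] := fprop psi [::]; exact: p2.
Qed.

Definition ev0 (psi : CoI) : Y := fval psi [::].
Lemma ev0_lin : islin ev0. Proof. by []. Qed.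

Section Coind.
Variables (Z : lmodType C) (dZ : int -> Z -> Z) (cZ : Z -> Z).
Hypothesis vZ : vir_module dZ cZ.
Variable (l : Z -> Y).
Hypothesis ll : islin l.

Fixpoint act (w : word) (z : Z) : Z :=
  match w with
  | [::] => z
  | Some i :: w' => act w' (dZ i z)
  | None :: w' => act w' (cZ z)
  end.

Lemma act_cat u x z : act (u ++ x) z = act x (act u z).
Proof. by elim: u z => [|[i|] u IH] z //=. Qed.

Lemma act_lin w : islin (act w).
Proof.
case: vZ => dlin clin _ _.
elim: w => [|[i|] w IH] a x y //=; by rewrite ?dlin ?clin IH.
Qed.

Lemma Rel_coind z : Rel (fun w => l (act w z)).
Proof.
case: vZ => dlin clin comm ccomm.
move=> u; split.
  move=> i j w; rewrite !act_cat /= -(linB ll) -(linB (act_lin w)) comm.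
  rewrite (linD (act_lin w)) (linZ (act_lin w)) (linD ll) (linZ ll).
  by case: ifP => _; rewrite ?(linZ (act_lin w)) ?(linZ ll) ?(lin0 (act_lin w)) ?(lin0 ll).
by move=> i w; rewrite !act_cat /= ccomm.
Qed.

Definition coind (z : Z) : CoI := SF (Rel_coind z).

Lemma coind_hom : vir_hom dZ cZ cod coc coind.
Proof.
split.
- move=> a x y; apply: sfunE => w /=; by rewrite (act_lin w) ll.
- by move=> i z; apply: sfunE => w.
- by move=> z; apply: sfunE => w.
Qed.

Lemma ev0_coind z : ev0 (coind z) = l z. Proof. by []. Qed.
End Coind.
End CoI.

Lemma subr_eqE' (Z : zmodType) (x y z : Z) : x - y = z -> x = z + y.
Proof. by move/eqP; rewrite subr_eq => /eqP. Qed.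

Lemma take1E (P : Omega) : take_poly 1 P = (P`_0)%:P.
Proof. by apply/polyP => i; rewrite coef_take_poly coefC; case: i. Qed.

Lemma decompP (P : Omega) : P = 'X * drop_poly 1 P + (P`_0)%:P.
Proof. by rewrite -{1}(poly_take_drop 1 P) take1E expr1 addrC mulrC. Qed.

Lemma size_drop1 (P : Omega) : size (drop_poly 1 P) = (size P).-1.
Proof. by rewrite size_drop_poly subn1. Qed.

Lemma drop1X (Q : Omega) : drop_poly 1 ('X * Q) = Q.
Proof. by rewrite mulrC -(expr1 'X) drop_polyMXn_id. Qed.

Lemma drop1D (P Q : Omega) : drop_poly 1 (P + Q) = drop_poly 1 P + drop_poly 1 Q.
Proof. exact: drop_polyD. Qed.

Lemma drop1C a (P : Omega) : drop_poly 1 (cst a * P) = cst a * drop_poly 1 P.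
Proof. by rewrite /cst !mul_polyC drop_polyZ. Qed.

Section Phi.
Variables (n : nat) (a : nat -> C) (th lam al : C) (h : {poly C}).
Hypothesis lam0 : lam != 0.
Local Notation dl := (omega_d lam al h).
Local Notation E := (Eop lam al h n).
Variables (M : lmodType C) (dM : int -> M -> M) (cM : M -> M) (iota : {poly C} -> M).
Hypothesis vM : vir_module dM cM.
Hypothesis hI : Ind_gen n a th lam al h dM cM iota.
Implicit Types (P Q R : Omega) (f : {poly C}).

Definition Dk (k : nat) (z : M) := dM k z - aext n a k *: z.
Local Notation cc := ((lam ^+ n)^-1).

Lemma Dk_lin k : islin (Dk k).
Proof. case: vM => dlin _ _ _ b x y; rewrite /Dk dlin; zmr. Qed.

Lemma iota_lin : islin iota. Proof. by case: hI. Qed.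

Fixpoint phi (N : nat) (P : Omega) : M :=
  match N with
  | 0 => 0
  | N'.+1 => iota (P`_0) + cc *: (Dk n (phi N' (drop_poly 1 P)) - phi N' (E (drop_poly 1 P)))
  end.

Lemma phi_stable N P : (size P <= N)%N -> phi N.+1 P = phi N P.
Proof.
elim: N P => [|N IH] P le.
  move: le; rewrite leqn0 size_poly_eq0 => /eqP ->.
  by rewrite /= coef0 (lin0 iota_lin) (lin0 (Dk_lin n)) subrr scaler0 addr0.
have sQ : (size (drop_poly 1 P) <= N)%N by rewrite size_drop1; lia.
have sE : (size (E (drop_poly 1 P)) <= N)%N by apply: leq_trans (size_Eop _ _ _ _ _) sQ.
transitivity (iota (P`_0) + cc *: (Dk n (phi N (drop_poly 1 P)) - phi N (E (drop_poly 1 P)))); last by [].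
by rewrite -(IH (drop_poly 1 P)) // -(IH (E _)).
Qed.

Definition phi0 P := phi (size P) P.

Lemma phi0E N P : (size P <= N)%N -> phi0 P = phi N P.
Proof.
move=> le; rewrite /phi0 -(subnK le); elim: (N - size P)%N => // k IH.
by rewrite addSn phi_stable ?IH // leq_addl.
Qed.

Lemma phiL N : (forall P Q, phi N (P + Q) = phi N P + phi N Q) /\
               (forall b P, phi N (cst b * P) = b *: phi N P).
Proof.
elim: N => [|N [IH1 IH2]]; first by split=> *; rewrite /= ?addr0 ?scaler0.
split.
  move=> P Q /=; rewrite coefD (linD iota_lin) drop1D EopD !IH1 (linD (Dk_lin n)).
  zmr.
move=> b P /=; rewrite drop1C EopC !IH2 (linZ (Dk_lin n)) /cst coefCM mul_polyC (linZ iota_lin).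
zmr.
Qed.

Lemma phi0D P Q : phi0 (P + Q) = phi0 P + phi0 Q.
Proof.
pose N := maxn (size P) (size Q).
rewrite (@phi0E N (P + Q)) ?(leq_trans (size_polyD _ _)) //.
by rewrite (@phi0E N P) ?leq_maxl // (@phi0E N Q) ?leq_maxr // (phiL N).1.
Qed.

Lemma phi0C b P : phi0 (cst b * P) = b *: phi0 P.
Proof.
rewrite (@phi0E (size P) (cst b * P)); first by rewrite (phiL (size P)).2.
by rewrite /cst mul_polyC size_scale_leq.
Qed.

Lemma phi0_0 : phi0 0 = 0. Proof. by rewrite /phi0 size_poly0. Qed.

Lemma phi0B P Q : phi0 (P - Q) = phi0 P - phi0 Q.
Proof.
rewrite phi0D; congr (_ + _).
by rewrite -mulN1r (_ : -1 = cst (-1)) ?phi0C ?scaleN1r // /cst !rmorphN !rmorph1.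
Qed.

Lemma phi0K f : phi0 f%:P = iota f.
Proof.
rewrite (@phi0E 1) ?size_polyC ?leq_b1 //= coefC eqxx.
by rewrite (lin0 (Dk_lin n)) subrr scaler0 addr0.
Qed.

Lemma phi0X Q : phi0 ('X * Q) = cc *: (Dk n (phi0 Q) - phi0 (E Q)).
Proof.
rewrite (@phi0E (size Q).+1); last first.
  have [->|nz] := eqVneq Q 0; first by rewrite mulr0 size_poly0.
  by rewrite mulrC size_mulX.
rewrite /= coefXM eqxx (lin0 iota_lin) add0r drop1X.
by rewrite (@phi0E (size Q) (E Q)) ?size_Eop.
Qed.

Lemma phi0_n R : phi0 (dl n R) = Dk n (phi0 R).
Proof.
have -> : dl n R = E R + cst (lam ^+ n) * ('X * R) by rewrite /Eop; ring.
rewrite phi0D phi0C phi0X scalerA mulfV ?expf_neq0 // scale1r; zmr.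
Qed.


Lemma phi0_const k f : (n <= k)%N -> phi0 (dl k f%:P) = Dk k (iota f).
Proof.
rewrite leq_eqVlt => /orP [/eqP <-|lt]; first by rewrite phi0_n phi0K.
have e := bmodE lam al h a f lt.
have -> : dl k f%:P = (bmod_act n a lam al h k f)%:P + cst (lam ^+ (k - n)) * dl n f%:P
   - cst (aext n a k - lam ^+ (k - n) * aext n a n) * f%:P by rewrite e; ring.
rewrite phi0B phi0D (phi0C _ (dl n f%:P)) (phi0C _ f%:P) phi0_n !phi0K.
case: hI => _ hb _; rewrite hb //.
rewrite /Dk; zmr.
Qed.

Lemma E_comm (k : nat) Q : E (dl k Q) = dl k (E Q) + cst ((Posz k - Posz n)%:~R) * dl (Posz n + Posz k) Q
   - cst (lam ^+ n * k%:R) * dl k Q.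
Proof.
have cm := @odComm lam al h lam0 n k Q.
rewrite /Eop odB odC odX.
have -> : dl n (dl k Q) = dl k (dl n Q) + cst ((Posz k - Posz n)%:~R) * dl (Posz n + Posz k) Q.
  by rewrite -cm; ring.
rewrite /cst; ring.
Qed.

Lemma phi0_main N : forall P, (size P <= N)%N -> forall k, (n <= k)%N ->
  phi0 (dl k P) = Dk k (phi0 P).
Proof.
elim: N => [|N IH] P.
  rewrite leqn0 size_poly_eq0 => /eqP -> k _.
  by rewrite od0 phi0_0 (lin0 (Dk_lin k)).
move=> sP k nk; rewrite (decompP P).
set Q := drop_poly 1 P; set c := P`_0.
have sQ : (size Q <= N)%N by rewrite /Q size_drop1; lia.
have sE : (size (E Q) <= N)%N by apply: leq_trans (size_Eop _ _ _ _ _) sQ.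
rewrite odD !phi0D phi0_const // phi0K (linD (Dk_lin k)); congr (_ + _).
set x := phi0 Q.
rewrite odX mulrBl phi0B (phi0C _ (dl k Q)) (phi0X (dl k Q)) (phi0X Q) (IH Q sQ k nk).
rewrite (linZ (Dk_lin k)) (linB (Dk_lin k)) -(IH _ sE k nk).
rewrite E_comm phi0B phi0D (phi0C _ (dl (Posz n + Posz k) Q)) (phi0C _ (dl k Q)) (IH Q sQ k nk) -PoszD (IH Q sQ (n + k)%N) ?leq_addr //.
have hk : k%:~R *: Dk k x = cc *: ((lam ^+ n * k%:R) *: Dk k x).
  by rewrite scalerA mulrA mulVf ?expf_neq0 // mul1r.
rewrite hk -scalerBr; congr (cc *: _).
case: vM => dlin clin comm ccomm.
have cm := comm n k x.
have hif : (if Posz n == - Posz k then ((Posz n ^+ 3 - Posz n)%:~R / 12%:R : C) *: cM x else 0) = 0.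
  case: eqP => // e.
  have n0 : n = 0%N by lia.
  by rewrite n0 /= mul0r scale0r.
rewrite hif addr0 in cm.
rewrite /Dk !(linB (dlin _)) !(linZ (dlin _)) (subr_eqE' cm) -PoszD -/x.
move: nk; rewrite leq_eqVlt => /orP [/eqP e|lt].
  subst k; rewrite subrr; zmr.
rewrite [aext n a (n + k)]/aext ifF; last by apply/negbTE; rewrite -ltnNge; lia.
zmr.
Qed.

Lemma phi_c N P : cM (phi N P) = th *: phi N P.
Proof.
case: vM => dlin clin comm ccomm; case: hI => _ _ hc.
elim: N P => [|N IH] P /=; first by rewrite (lin0 clin) scaler0.
rewrite (linD clin) (linZ clin) (linB clin) hc IH /Dk (linB clin) (linZ clin) ccomm IH.
rewrite (linZ (dlin _)); zmr.
Qed.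

Lemma phi0_c P : cM (phi0 P) = th *: phi0 P.
Proof. exact: phi_c. Qed.

End Phi.

Section Psi.
Variables (lam al : C) (h : {poly C}).
Hypothesis lam0 : lam != 0.
Local Notation dl := (omega_d lam al h).
Variables (V : lmodType C) (dV : int -> V -> V) (cV : V -> V).
Hypothesis vV : vir_module dV cV.
Variables (Y : lmodType C) (g : Omega -> V -> Y).
Hypothesis gb : om_bilin g.

Fixpoint psi (w : word) (P : Omega) (v : V) : Y :=
  match w with
  | [::] => g P v
  | Some i :: w' => psi w' (dl i P) v + psi w' P (dV i v)
  | None :: w' => psi w' P (cV v)
  end.

Lemma psiL w : [/\ forall P Q v, psi w (P + Q) v = psi w P v + psi w Q v,
  forall b P v, psi w (cst b * P) v = b *: psi w P v,
  forall P u x, psi w P (u + x) = psi w P u + psi w P x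
  & forall b P v, psi w P (b *: v) = b *: psi w P v].
Proof.
case: vV => dlin clin _ _.
elim: w => [|[i|] w [IH1 IH2 IH3 IH4]] /=; first by case: gb.
  split.
  - by move=> P Q v; rewrite odD !IH1; zmr.
  - by move=> b P v; rewrite odC !IH2; zmr.
  - by move=> P u x; rewrite (linD (dlin i)) !IH3; zmr.
  - by move=> b P v; rewrite (linZ (dlin i)) !IH4; zmr.
split.
- by move=> P Q v; rewrite IH1.
- by move=> b P v; rewrite IH2.
- by move=> P u x; rewrite (linD clin) IH3.
- by move=> b P v; rewrite (linZ clin) IH4.
Qed.

Lemma psi_rel P v : Rel (fun w => psi w P v).
Proof.
case: vV => dlin clin comm ccomm.
move=> u; elim: u P v => [|[i|] u IH] P v /=.
- split=> [i j w|i w] /=; last by rewrite ccomm.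
  have [L1 L2 L3 L4] := psiL w.
  have eO : dl i (dl j P) = dl j (dl i P) + cst ((j - i)%:~R) * dl (i + j) P.
    by rewrite -(@odComm lam al h lam0 i j P); ring.
  rewrite eO (subr_eqE (comm i j v)) L1 L2 !L3 L4.
  have p0 : psi w P 0 = 0 by have := L4 0 P 0; rewrite !scale0r.
  case: (i == - j); rewrite ?L4 ?p0 /=; last by zmr.
  set kk := (_ / _); zmr.
- have [a1 a2] := IH (dl i P) v; have [b1 b2] := IH P (dV i v); split.
    move=> i0 j w; rewrite (subr_eqE (a1 i0 j w)) (subr_eqE (b1 i0 j w)).
    case: (i0 == - j); last by zmr.
    set kk := (_ / _); zmr.
  by move=> i0 w; rewrite a2 b2.
- exact: IH.
Qed.

Definition psiF P v : CoI Y := SF (psi_rel P v).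

Lemma omlin_Psi v : omlin (fun P => psiF P v).
Proof.
split.
  by move=> P Q; apply: sfunE => w /=; have [L1 _ _ _] := psiL w; rewrite L1.
by move=> b P; apply: sfunE => w /=; have [_ L2 _ _] := psiL w; rewrite L2.
Qed.

Definition Psi v : HM (CoI Y) := SF (omlin_Psi v).

Lemma Psi_hom : vir_hom dV cV (hmd lam al h (CoI_vir Y)) (hmc (CoI_vir Y)) Psi.
Proof.
split.
- move=> b u x; apply: sfunE => P; apply: sfunE => w /=.
  by have [_ _ L3 L4] := psiL w; rewrite L3 L4.
- move=> m v; apply: sfunE => P; apply: sfunE => w /=; zmr.
- by move=> v; apply: sfunE => P; apply: sfunE => w.
Qed.

Lemma Psi_val P v w : fval (fval (Psi v) P) w = psi w P v. Proof. by []. Qed.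
End Psi.

Section Post.
Variables (lam al : C) (h : {poly C}).
Local Notation dl := (omega_d lam al h).
Variables (Z1 : lmodType C) (d1 : int -> Z1 -> Z1) (c1 : Z1 -> Z1).
Variables (Z2 : lmodType C) (d2 : int -> Z2 -> Z2) (c2 : Z2 -> Z2).
Hypothesis v1 : vir_module d1 c1.
Hypothesis v2 : vir_module d2 c2.
Variable (G : Z1 -> Z2).
Hypothesis hG : vir_hom d1 c1 d2 c2 G.

Lemma omlin_post (phi : HM Z1) : omlin (fun P => G (fval phi P)).
Proof.
case: hG => gl _ _; case: (fprop phi) => p1 p2; split.
  by move=> P Q; rewrite p1 (linD gl).
by move=> b P; rewrite p2 (linZ gl).
Qed.

Definition post (phi : HM Z1) : HM Z2 := SF (omlin_post phi).

Lemma post_hom : vir_hom (hmd lam al h v1) (hmc v1) (hmd lam al h v2) (hmc v2) post.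
Proof.
case: hG => gl gd gc; split.
- by move=> b u x; apply: sfunE => P /=; rewrite gl.
- by move=> m phi; apply: sfunE => P /=; rewrite (linB gl) gd.
- by move=> phi; apply: sfunE => P /=; rewrite gc.
Qed.
End Post.

Section Uniq.
Variables (lam al : C) (h : {poly C}).
Hypothesis lam0 : lam != 0.
Local Notation dl := (omega_d lam al h).
Variables (Z : lmodType C) (dZ : int -> Z -> Z) (cZ : Z -> Z).
Hypothesis vZ : vir_module dZ cZ.
Variable n : nat.

Lemma HM_uniq0 (psi : HM Z) (b : C) :
  (forall f, fval psi f%:P = 0) ->
  (forall R, fval psi (dl n R) = dZ n (fval psi R) - b *: fval psi R) ->
  forall P, fval psi P = 0.
Proof.
move=> h0 hn P; case: vZ => dlin _ _ _; case: (fprop psi) => p1 p2.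
have pB : forall P Q, fval psi (P - Q) = fval psi P - fval psi Q by exact: omlinB.
elim: {P}(size P) {-2}P (leqnn (size P)) => [|N IH] P sP.
  by move: sP; rewrite leqn0 size_poly_eq0 => /eqP ->; have := h0 0.
rewrite (decompP P) p1 h0 addr0.
set Q := drop_poly 1 P.
have sQ : (size Q <= N)%N by rewrite /Q size_drop1; lia.
have sE : (size (Eop lam al h n Q) <= N)%N by apply: leq_trans (size_Eop _ _ _ _ _) sQ.
have e : cst (lam ^+ n) * ('X * Q) = dl n Q - Eop lam al h n Q by rewrite /Eop; ring.
apply: (@scalerI _ _ (lam ^+ n)); first by rewrite expf_neq0.
rewrite scaler0 -p2 e pB hn !IH // (lin0 (dlin _)); zmr.
Qed.

Lemma HM_uniq (x1 x2 : HM Z) (b : C) :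
  (forall f, fval x1 f%:P = fval x2 f%:P) ->
  hmd lam al h vZ n x1 = b *: x1 -> hmd lam al h vZ n x2 = b *: x2 -> x1 = x2.
Proof.
have [dlin _ _ _] := vZ.
move=> hc e1 e2; apply: sfunE => P; apply/eqP; rewrite -subr_eq0; apply/eqP.
have -> : fval x1 P - fval x2 P = fval (x1 - x2) P by rewrite svalD /= scaleN1r.
apply: (@HM_uniq0 _ b) => [f|R]; first by rewrite svalD /= hc; zmr.
have a1 := congr1 (fun u => fval u R) e1; have a2 := congr1 (fun u => fval u R) e2.
rewrite /= in a1 a2.
have a1' : fval x1 (dl n R) = dZ n (fval x1 R) - b *: fval x1 R by rewrite -a1; zmr.
have a2' : fval x2 (dl n R) = dZ n (fval x2 R) - b *: fval x2 R by rewrite -a2; zmr.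
rewrite !svalD /= a1' a2' (linD (dlin n)) (linZ (dlin n)); zmr.
Qed.
End Uniq.


Theorem theorem5p2 (n : nat) (a : nat -> C) (th lam al xi eta : C) :
  lam != 0 -> al != 0 -> xi != 0 ->
  forall (V : lmodType C) (dV : int -> V -> V) (cV : V -> V) (w : V),
  is_Va n a th dV cV w ->
  forall (M : lmodType C) (dM : int -> M -> M) (cM : M -> M) (iota : {poly C} -> M),
  is_Ind n a th lam al (xi *: 'X + eta%:P) dM cM iota ->
  exists beta : Omega -> V -> M,
    [/\ is_tensor beta,
        forall (m : int) P v,
          dM m (beta P v) = beta (omega_d lam al (xi *: 'X + eta%:P) m P) v + beta P (dV m v)
      & forall P v, cM (beta P v) = beta (omega_c P) v + beta P (cV v)].
Proof.
move=> lam0 _ _ V dV cV w HVa M dM cM iota HInd.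
move: HInd; set h := xi *: 'X + eta%:P => HInd.
have [vV VaW univV] := HVa.
have [vM IndG univM] := HInd.
have vX := HM_vir al h lam0 vM.
have omp : omlin (phi0 n a lam al h dM iota).
  by split=> *; [apply: (phi0D lam0 vM IndG) | apply: (phi0C lam0 vM IndG)].
pose p0 : HM M := SF omp.
have Vp0 : Va_gen n a th (hmd lam al h vM) (hmc vM) p0.
  split.
  - move=> i /andP [ni i2n]; apply: sfunE => P /=.
    rewrite (phi0_main lam0 vM IndG (leqnn (size P)) ni) /Dk /aext i2n; zmr.
  - move=> i i2n; apply: sfunE => P /=.
    rewrite (phi0_main lam0 vM IndG (leqnn (size P))) /Dk /aext ?ifF; last by lia.
      zmr.
    by apply/negbTE; rewrite -ltnNge.
  - by apply: sfunE => P /=; apply: (phi0_c vM IndG).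
have [[f [fh fw]] _] := univV _ _ _ p0 vX Vp0.
have [fl fd fc] := fh.
pose beta P v := fval (f v) P.
have beta0 : forall v, beta 0 v = 0.
  move=> v; rewrite /beta; have [_ p2] := fprop (f v).
  by have := p2 0 0; rewrite mulr0 scale0r.
have betaw : forall q, beta q%:P w = iota q.
  by move=> q; rewrite /beta fw /= (phi0K lam0 vM IndG).
have bd : forall (m : int) P v,
    dM m (beta P v) = beta (omega_d lam al h m P) v + beta P (dV m v).
  by move=> m P v; rewrite /beta fd /=; zmr.
have bc : forall P v, cM (beta P v) = beta (omega_c P) v + beta P (cV v).
  by move=> P v; rewrite /beta /omega_c fc /= -/(beta 0 v) beta0 add0r.
exists beta; split => //.
split.
  split.
  - by move=> P Q v; rewrite /beta; have [p1 _] := fprop (f v); rewrite p1.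
  - by move=> b P v; rewrite /beta; have [_ p2] := fprop (f v); rewrite p2.
  - by move=> P u x; rewrite /beta (linD fl).
  - by move=> b P v; rewrite /beta (linZ fl).
move=> Y g gb; split.
  have gbPsi := Psi_hom al h lam0 vV gb.
  pose PW := Psi al h lam0 vV gb w.
  pose j q := fval PW (q%:P).
  have [p1 p2] := fprop PW.
  have pB : forall P Q, fval PW (P - Q) = fval PW P - fval PW Q by exact: omlinB.
  have IJ : Ind_gen n a th lam al h (@cod Y) (@coc Y) j.
    have [h1 h2 h3] := VaW.
    have dk : forall k, (n <= k)%N -> dV k w = aext n a k *: w.
      move=> k nk; rewrite /aext; case: ifP => le; first by apply: h1; rewrite nk le.
      by rewrite scale0r h2 // ltnNge le.
    split.
    - move=> b q1 q2; rewrite /j (_ : (b *: q1 + q2)%:P = cst b * q1%:P + q2%:P).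
        by rewrite p1 p2.
      by rewrite /cst polyCD -mul_polyC polyCM.
    - move=> k q hk; rewrite /j (bmodE lam al h a q hk) p1 pB p2 p2.
      apply: sfunE => wd /=.
      have [L1 L2 L3 L4] := psiL lam al h vV gb wd.
      rewrite (dk k (ltnW hk)) (dk n (leqnn n)) !L4; zmr.
    - move=> q; apply: sfunE => wd /=.
      have [L1 L2 L3 L4] := psiL lam al h vV gb wd.
      by rewrite h3 L4.
  have [[Gm [Gh Gi]] _] := univM _ _ _ _ (CoI_vir Y) IJ.
  have [Gl Gd Gc] := Gh.
  exists (fun m => ev0 (Gm m)); split; first exact: (islin_comp Gl (@ev0_lin Y)).
  have vX2 := HM_vir al h lam0 (CoI_vir Y).
  have Vx := Va_gen_hom gbPsi VaW.
  have [_ uV] := univV _ _ _ _ vX2 Vx.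
  have PH := post_hom lam al h vM (CoI_vir Y) Gh.
  have hv : forall v, post Gh (f v) = Psi al h lam0 vV gb v.
    apply: (uV _ _ (vir_hom_comp fh PH) gbPsi) => //.
    rewrite fw; apply: (HM_uniq lam0 (vZ := CoI_vir Y) (n:=n) (b:=a n)).
    - by move=> q /=; rewrite (phi0K lam0 vM IndG) Gi.
    - have [e1 _ _] := Va_gen_hom PH Vp0; apply: e1; lia.
    - have [e1 _ _] := Vx; apply: e1; lia.
  move=> P v.
  by have := congr1 (fun u => fval (fval u P) [::]) (hv v).
move=> g1 g2 l1 l2 e1 e2 x.
have key : forall wd P v, g1 (act dM cM wd (beta P v)) = g2 (act dM cM wd (beta P v)).
  elim=> [|[i|] wd IH] P v /=; first by rewrite e1 e2.
    by rewrite bd !(linD (act_lin vM wd)) !(linD l1) !(linD l2) !IH.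
  by rewrite bc beta0 add0r IH.
have IJ := Ind_gen_hom (coind_hom vM l1) IndG.
have [_ uniq] := univM _ _ _ _ (CoI_vir Y) IJ.
have e : coind vM l1 x = coind vM l2 x.
  apply: (uniq _ _ (coind_hom vM l1) (coind_hom vM l2)) => // q.
  by apply: sfunE => wd /=; rewrite -betaw key.
by have := congr1 (fun u => fval u [::]) e.
Qed.
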